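(* Let $\mathcal{H}$ be a hedgehog with support function $h(s)=a_0+\sum_{n\geqslant1}(a_n\cos(ns)+b_n\sin(ns))$ and average width $\overline{w}$, and let $k>2$ be an integer. Then the $k$th Order Preserving Set $\mathcal{P}_k$ of $\mathcal{H}$ is a hedgehog with support function \[ h_k(s)=\frac1k\sum_{j=0}^{k-1}h\Big(s+\frac{2\pi j}{k}\Big)-\frac12\overline{w}, \] i.e. $\mathcal{P}_k(s)=h_k(s)u(s)+h_k'(s)u'(s)$ for all $s$, and \[ h_k(s)=\sum_{k\mid n,\ n>1}\big(a_n\cos(ns)+b_n\sin(ns)\big). \]
   Context: Write $u(s)=(\cos s,\sin s)$ and $u'(s)=(-\sin s,\cos s)$. A hedgehog is a closed planar curve determined by a smooth $2\pi$-periodic function $h$ (its support function; equivalently, the difference of support functions of two convex bodies) via $\mathcal{H}(s)=h(s)u(s)+h'(s)u'(s)$, $s\in[0,2\pi]$. Its average width is $\overline{w}=\frac1\pi\int_0^{2\pi}h(s)\,ds$. For $(x,y)\in\mathbb{R}^2$ let $(x,y)^\perp=(-y,x)$ and set $\mathcal{H}^\perp(s)=\mathcal{H}(s)^\perp$. The $k$th Order Preserving Set of $\mathcal{H}$ is the curve $\mathcal{P}_k(s)=\frac{1}{k}\sum_{j=1}^{k}\Big(\cos\big(\tfrac{2\pi j}{k}\big)\,\mathcal{H}\big(s+\tfrac{2\pi j}{k}\big)-\sin\big(\tfrac{2\pi j}{k}\big)\,\mathcal{H}^{\perp}\big(s+\tfrac{2\pi j}{k}\big)\Big)-\frac{1}{2}\overline{w}\,u(s)$,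 $s\in[0,2\pi]$. (The points $\mathcal{H}(s+2\pi j/k)$, $j=1,\dots,k$, form an isogonal family: their normals are spaced by angles $2\pi/k$.) *)

(* Defs.v *)
From Stdlib Require Import Reals Lra.
From Coquelicot Require Import Coquelicot.
Open Scope R_scope.

Definition vec := (R * R)%type.
Definition vadd (p q : vec) : vec := (fst p + fst q, snd p + snd q).
Definition vscal (c : R) (p : vec) : vec := (c * fst p, c * snd p).
Definition perp (p : vec) : vec := (- snd p, fst p).

Definition u (s : R) : vec := (cos s, sin s).
Definition u' (s : R) : vec := (- sin s, cos s).

Definition smooth (h : R -> R) : Prop := forall (n : nat) (x : R), ex_derive_n h n x.
Definition periodic2pi (h : R -> R) : Prop := forall s, h (s + 2 * PI) = h s.

Definition hedgehog (h : R -> R) (s : R) : vec :=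
  vadd (vscal (h s) (u s)) (vscal (Derive h s) (u' s)).

Definition hedgehog_perp (h : R -> R) (s : R) : vec := perp (hedgehog h s).

Definition avg_width (h : R -> R) : R := / PI * RInt h 0 (2 * PI).

(* vsum f n = f 1 + ... + f n *)
Fixpoint vsum (f : nat -> vec) (n : nat) : vec :=
  match n with
  | O => (0, 0)
  | S m => vadd (vsum f m) (f (S m))
  end.

Definition OPS (h : R -> R) (k : nat) (s : R) : vec :=
  vadd
    (vscal (/ INR k)
       (vsum (fun j =>
          let t := 2 * PI * INR j / INR k in
          vadd (vscal (cos t) (hedgehog h (s + t)))
               (vscal (- sin t) (hedgehog_perp h (s + t)))) k))
    (vscal (- (/ 2 * avg_width h)) (u s)).

Definition hk (h : R -> R) (k : nat) (s : R) : R :=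
  / INR k * sum_n_m (fun j => h (s + 2 * PI * INR j / INR k)) 0 (k - 1)
  - / 2 * avg_width h.

Definition fourier_a0 (h : R -> R) : R := / (2 * PI) * RInt h 0 (2 * PI).
Definition fourier_a (h : R -> R) (n : nat) : R :=
  / PI * RInt (fun s => h s * cos (INR n * s)) 0 (2 * PI).
Definition fourier_b (h : R -> R) (n : nat) : R :=
  / PI * RInt (fun s => h s * sin (INR n * s)) 0 (2 * PI).

Definition fourier_term_div (h : R -> R) (k : nat) (s : R) (n : nat) : R :=
  if (Nat.ltb 1 n && Nat.eqb (n mod k) 0)%bool
  then fourier_a h n * cos (INR n * s) + fourier_b h n * sin (INR n * s)
  else 0.

(* Main.v *)
Require Import Defs.
From Stdlib Require Import Reals.
From Coquelicot Require Import Coquelicot.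
From Stdlib Require Import Lra Lia ZArith.
Open Scope R_scope.

Fixpoint fsum (f : nat -> R) (N : nat) : R :=
  match N with O => 0 | S m => fsum f m + f (S m) end.

Lemma fsum_ext f g N : (forall n, f n = g n) -> fsum f N = fsum g N.
Proof. intros H; induction N; simpl; [reflexivity| rewrite IHN, H; reflexivity]. Qed.

Lemma sum_n_m_S0 (a : nat -> R) m : sum_n_m a 0 (S m) = sum_n_m a 0 m + a (S m).
Proof. rewrite sum_n_Sm; [reflexivity| lia]. Qed.

Lemma fsum_shift (A : nat -> R) m : fsum A (S m) = sum_n_m A 0 m - A 0%nat + A (S m).
Proof.
  induction m.
  - simpl. rewrite sum_n_n. ring.
  - change (fsum A (S (S m))) with (fsum A (S m) + A (S (S m))).
    rewrite IHm, sum_n_m_S0. ring.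
Qed.

Lemma sum_n_fsum (a : nat -> R) N : sum_n a N = a 0%nat + fsum a N.
Proof.
  induction N.
  - rewrite sum_O. simpl. ring.
  - rewrite sum_Sn, IHN. simpl. unfold plus; simpl. ring.
Qed.

Lemma smooth_ext f g : (forall x, f x = g x) -> smooth f -> smooth g.
Proof. intros H Hf n x. eapply ex_derive_n_ext; [exact H| apply Hf]. Qed.

Lemma smooth_plus f g : smooth f -> smooth g -> smooth (fun x => f x + g x).
Proof. intros Hf Hg n x; apply ex_derive_n_plus; apply filter_forall; intros; auto. Qed.

Lemma smooth_scal a f : smooth f -> smooth (fun x => a * f x).
Proof. intros Hf n x; apply ex_derive_n_scal_l; auto. Qed.

Lemma smooth_shift b f : smooth f -> smooth (fun y => f (y + b)).
Proof. intros Hf n x; apply ex_derive_n_comp_trans; auto. Qed.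

Lemma smooth_const c : smooth (fun _ => c).
Proof. intros n x; apply ex_derive_n_const. Qed.

Lemma smooth_sum (F : nat -> R -> R) m : (forall j, smooth (F j)) ->
  smooth (fun x => sum_n_m (fun j => F j x) 0 m).
Proof.
  intros HF. induction m.
  - eapply smooth_ext; [| apply (HF 0%nat)]. intros x; simpl. rewrite sum_n_n; reflexivity.
  - eapply smooth_ext; [| apply (smooth_plus _ _ IHm (HF (S m)))].
    intros x; simpl. rewrite sum_n_m_S0. reflexivity.
Qed.

Lemma is_derive_sum (F : nat -> R -> R) (dF : nat -> R) m x :
  (forall j, is_derive (F j) x (dF j)) ->
  is_derive (fun y => sum_n_m (fun j => F j y) 0 m) x (sum_n_m dF 0 m).
Proof.
  intros HF. induction m.
  - rewrite sum_n_n. eapply is_derive_ext; [| apply (HF 0%nat)].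
    intros t; simpl; rewrite sum_n_n; reflexivity.
  - rewrite sum_n_m_S0. eapply is_derive_ext; [| apply (is_derive_plus _ _ _ _ _ IHm (HF (S m)))].
    intros t; simpl. rewrite sum_n_m_S0. reflexivity.
Qed.

Lemma ex_derive_of_smooth h : smooth h -> forall x, ex_derive h x.
Proof. intros H x. exact (H 1%nat x). Qed.
Lemma ex_derive1_of_smooth h : smooth h -> forall x, ex_derive (Derive h) x.
Proof. intros H x. exact (H 2%nat x). Qed.
Lemma ex_derive2_of_smooth h : smooth h -> forall x, ex_derive (Derive (Derive h)) x.
Proof. intros H x. exact (H 3%nat x). Qed.

Lemma is_derive_shift h x c : ex_derive h (x + c) -> is_derive (fun y => h (y + c)) x (Derive h (x + c)).
Proof.
  intros H. auto_derive; [exact H| rewrite Rmult_1_l; reflexivity].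
Qed.

Lemma Derive_periodic f x : periodic2pi f -> ex_derive f (x + 2 * PI) -> Derive f (x + 2 * PI) = Derive f x.
Proof.
  intros Hp H. symmetry. apply is_derive_unique.
  eapply is_derive_ext; [| apply is_derive_shift, H].
  intros t; apply Hp.
Qed.

Lemma rot_term (a b s t : R) :
  vadd (vscal (cos t) (vadd (vscal a (u (s+t))) (vscal b (u' (s+t)))))
       (vscal (- sin t) (perp (vadd (vscal a (u (s+t))) (vscal b (u' (s+t)))))) =
  (a * cos s - b * sin s, a * sin s + b * cos s).
Proof.
  unfold vadd, vscal, perp, u, u'; simpl.
  assert (Hc : cos s = cos (s+t) * cos t + sin (s+t) * sin t)
    by (rewrite <- cos_minus; f_equal; ring).
  assert (Hs : sin s = sin (s+t) * cos t - cos (s+t) * sin t)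
    by (rewrite <- sin_minus; f_equal; ring).
  rewrite Hc, Hs. f_equal; ring.
Qed.

Lemma vsum_ext f g m : (forall j, f j = g j) -> vsum f m = vsum g m.
Proof. intros H; induction m; simpl; [reflexivity| rewrite IHm, H; reflexivity]. Qed.

Lemma vsum_lin (A B : nat -> R) c d m :
  vsum (fun j => (A j * c - B j * d, A j * d + B j * c)) m =
  (fsum A m * c - fsum B m * d, fsum A m * d + fsum B m * c).
Proof.
  induction m; simpl.
  - f_equal; ring.
  - rewrite IHm. unfold vadd; simpl. f_equal; ring.
Qed.

Lemma hk_smooth h k : smooth h -> smooth (hk h k).
Proof.
  intros Hs. unfold hk.
  apply smooth_plus with (g := fun _ => - (/2 * avg_width h)) ; [| apply smooth_const].
  - apply smooth_scal. apply smooth_sum. intros j. apply smooth_shift, Hs.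
Qed.

Lemma hk_periodic h k : periodic2pi h -> periodic2pi (hk h k).
Proof.
  intros Hp s. unfold hk. f_equal. f_equal. apply sum_n_m_ext. intros j.
  replace (s + 2 * PI + 2 * PI * INR j / INR k) with ((s + 2 * PI * INR j / INR k) + 2 * PI) by ring.
  apply Hp.
Qed.

Lemma hk_derive h k s : smooth h ->
  Derive (hk h k) s = / INR k * sum_n_m (fun j => Derive h (s + 2 * PI * INR j / INR k)) 0 (k - 1).
Proof.
  intros Hs.
  assert (HS : is_derive (fun y => sum_n_m (fun j => h (y + 2 * PI * INR j / INR k)) 0 (k-1)) s (sum_n_m (fun j => Derive h (s + 2 * PI * INR j / INR k)) 0 (k - 1))).
  { apply is_derive_sum. intros j. apply is_derive_shift. apply ex_derive_of_smooth, Hs. }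
  apply is_derive_unique. unfold hk.
  set (S := fun y => sum_n_m (fun j => h (y + 2 * PI * INR j / INR k)) 0 (k-1)) in *.
  change (is_derive (fun y => / INR k * S y - / 2 * avg_width h) s
    (/ INR k * sum_n_m (fun j : nat => Derive h (s + 2 * PI * INR j / INR k)) 0 (k - 1))).
  assert (HS' : is_derive S s (sum_n_m (fun j : nat => Derive h (s + 2 * PI * INR j / INR k)) 0 (k - 1))) by exact HS.
  clear HS. rename HS' into HS.
  set (c := INR k) in *. set (w := avg_width h). clearbody S w. auto_derive.
  - exists (sum_n_m (fun j => Derive h (s + 2 * PI * INR j / c)) 0 (k - 1)). exact HS.
  - rewrite Rmult_1_l. f_equal. apply is_derive_unique. exact HS.
Qed.

Lemma OPS_eq h m s : smooth h -> periodic2pi h -> OPS h (S m) s = hedgehog (hk h (S m)) s.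
Proof.
  intros Hs Hp.
  set (A := fun j => h (s + 2 * PI * INR j / INR (S m))).
  set (B := fun j => Derive h (s + 2 * PI * INR j / INR (S m))).
  assert (Hk : INR (S m) <> 0) by (apply not_0_INR; lia).
  assert (E1 : s + 2 * PI * INR (S m) / INR (S m) = s + 2 * PI) by (field; exact Hk).
  assert (E0 : s + 2 * PI * INR 0 / INR (S m) = s) by (simpl; field; exact Hk).
  assert (HA : A (S m) = A 0%nat) by (unfold A; rewrite E1, E0; apply Hp).
  assert (HB : B (S m) = B 0%nat).
  { unfold B; rewrite E1, E0. apply Derive_periodic; [exact Hp| apply ex_derive_of_smooth, Hs]. }
  unfold OPS.
  rewrite (vsum_ext _ (fun j => (A j * cos s - B j * sin s, A j * sin s + B j * cos s))).
  2:{ intros j. cbv zeta. unfold hedgehog_perp, hedgehog. apply rot_term. }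
  rewrite vsum_lin, !fsum_shift, HA, HB.
  unfold hedgehog. rewrite hk_derive by exact Hs.
  replace (S m - 1)%nat with m by lia.
  unfold hk. fold A. fold B. replace (S m - 1)%nat with m by lia.
  unfold vadd, vscal, u, u'; simpl. f_equal; ring.
Qed.

Lemma RInt_plus' (f g : R -> R) a b : ex_RInt f a b -> ex_RInt g a b ->
  RInt (fun t => f t + g t) a b = RInt f a b + RInt g a b.
Proof. intros H1 H2. exact (RInt_plus f g a b H1 H2). Qed.

Lemma RInt_minus' (f g : R -> R) a b : ex_RInt f a b -> ex_RInt g a b ->
  RInt (fun t => f t - g t) a b = RInt f a b - RInt g a b.
Proof. intros H1 H2. exact (RInt_minus f g a b H1 H2). Qed.

Lemma RInt_scal' (f : R -> R) a b c : ex_RInt f a b -> RInt (fun t => c * f t) a b = c * RInt f a b.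
Proof. intros H1. exact (RInt_scal f a b c H1). Qed.

Lemma ex_RInt_cont (f : R -> R) a b : (forall t, continuous f t) -> ex_RInt f a b.
Proof. intros H. apply (@ex_RInt_continuous R_CompleteNormedModule). intros; apply H. Qed.

Lemma cont_of_derive (f : R -> R) : (forall t, ex_derive f t) -> forall t, continuous f t.
Proof. intros H t. apply (@ex_derive_continuous R_AbsRing R_NormedModule), H. Qed.

Lemma fsum_ext1 f g N : (forall n, (1 <= n)%nat -> f n = g n) -> fsum f N = fsum g N.
Proof. intros H; induction N; simpl; [reflexivity| rewrite IHN, H; [reflexivity| lia]]. Qed.

Lemma fsum_lin a b f g N : fsum (fun n => a * f n + b * g n) N = a * fsum f N + b * fsum g N.
Proof. induction N; simpl; [ring| rewrite IHN; ring]. Qed.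

Lemma is_derive_fsum (F : nat -> R -> R) (dF : nat -> R) N x :
  (forall n, (1 <= n)%nat -> is_derive (F n) x (dF n)) ->
  is_derive (fun y => fsum (fun n => F n y) N) x (fsum dF N).
Proof.
  intros HF. induction N; simpl.
  - apply (@is_derive_const R_AbsRing R_NormedModule).
  - apply (@is_derive_plus R_AbsRing R_NormedModule (fun y => fsum (fun n => F n y) N) (F (S N))); [exact IHN| apply HF; lia].
Qed.

Lemma ex_derive_fsum (F : nat -> R -> R) N x :
  (forall n, (1 <= n)%nat -> ex_derive (F n) x) ->
  ex_derive (fun y => fsum (fun n => F n y) N) x.
Proof.
  intros HF. induction N; simpl.
  - apply (@ex_derive_const R_AbsRing R_NormedModule).
  - apply (@ex_derive_plus R_AbsRing R_NormedModule (fun y => fsum (fun n => F n y) N) (F (S N))); [exact IHN| apply HF; lia].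
Qed.

Lemma sin_nPI n : sin (INR n * PI) = 0.
Proof.
  induction n.
  - simpl. rewrite Rmult_0_l. apply sin_0.
  - rewrite S_INR. replace ((INR n + 1) * PI) with (INR n * PI + PI) by ring.
    rewrite sin_plus, IHn, sin_PI. ring.
Qed.

Lemma sin_2nPI n : sin (INR n * (2 * PI)) = 0.
Proof. replace (INR n * (2 * PI)) with (0 + 2 * INR n * PI) by ring. rewrite sin_period. apply sin_0. Qed.

Lemma cos_2nPI n : cos (INR n * (2 * PI)) = 1.
Proof. replace (INR n * (2 * PI)) with (0 + 2 * INR n * PI) by ring. rewrite cos_period. apply cos_0. Qed.

Lemma RInt_shift_lin (g : R -> R) c a b : (forall y, continuous g y) ->
  RInt (fun t => g (t + c)) a b = RInt g (a + c) (b + c).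
Proof.
  intros Hc.
  pose proof (RInt_comp_lin g 1 c a b) as E.
  replace (1 * a + c) with (a + c) in E by ring.
  replace (1 * b + c) with (b + c) in E by ring.
  rewrite <- E by (apply ex_RInt_cont, Hc).
  apply RInt_ext. intros y _. unfold scal; simpl; unfold mult; simpl. rewrite Rmult_1_l. f_equal; ring.
Qed.

Lemma RInt_periodic_shift (g : R -> R) x : (forall y, continuous g y) -> periodic2pi g ->
  RInt (fun t => g (x + t)) 0 (2*PI) = RInt g 0 (2*PI).
Proof.
  intros Hc Hp.
  assert (E1 : RInt (fun t => g (x + t)) 0 (2*PI) = RInt g x (x + 2 * PI)).
  { rewrite <- (RInt_ext (fun t => g (t + x))) by (intros; f_equal; ring).
    rewrite RInt_shift_lin by exact Hc. f_equal; ring. }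
  assert (E2 : RInt g (2 * PI) (x + 2 * PI) = RInt g 0 x).
  { rewrite <- (RInt_ext (fun t => g (t + 2 * PI)) g 0 x) by (intros; apply Hp).
    rewrite RInt_shift_lin by exact Hc. f_equal; ring. }
  rewrite E1.
  rewrite <- (RInt_Chasles g x 0 (x + 2 * PI)) by (apply ex_RInt_cont, Hc).
  rewrite <- (RInt_Chasles g 0 (2 * PI) (x + 2 * PI)) by (apply ex_RInt_cont, Hc).
  rewrite E2. rewrite <- (opp_RInt_swap g 0 x) by (apply ex_RInt_cont, Hc).
  unfold plus, opp; simpl. ring.
Qed.

Lemma RInt_derive' (f df : R -> R) a b :
  (forall x, Rmin a b <= x <= Rmax a b -> is_derive f x (df x)) ->
  (forall x, Rmin a b <= x <= Rmax a b -> continuous df x) ->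
  RInt df a b = f b - f a.
Proof.
  intros H1 H2. apply (@is_RInt_unique R_CompleteNormedModule).
  exact (@is_RInt_derive R_CompleteNormedModule f df a b H1 H2).
Qed.

Lemma RInt_ext' (f g : R -> R) a b :
  (forall x, Rmin a b < x < Rmax a b -> f x = g x) -> RInt f a b = RInt g a b.
Proof. apply RInt_ext. Qed.

Ltac exd := repeat match goal with |- _ /\ _ => split end; try exact I;
  match goal with
  | H : forall y, ex_derive ?f y |- ex_derive _ _ => apply H
  | _ => idtac end.

Ltac etaD := repeat match goal with |- context [Derive (fun y => ?f y)] => change (Derive (fun y => f y)) with (Derive f) end.

Ltac conti := apply cont_of_derive; intros; auto_derive; exd.


Lemma hd0 h : smooth h -> forall y, ex_derive h y.
Proof. apply ex_derive_of_smooth. Qed.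
Lemma hd1 h : smooth h -> forall y, ex_derive (Derive h) y.
Proof. apply ex_derive1_of_smooth. Qed.
Lemma hd2 h : smooth h -> forall y, ex_derive (Derive (Derive h)) y.
Proof. apply ex_derive2_of_smooth. Qed.
Lemma per1 h : smooth h -> periodic2pi h -> periodic2pi (Derive h).
Proof. intros Hs Hp s. apply Derive_periodic; [exact Hp| apply hd0, Hs]. Qed.
Lemma per2 h : smooth h -> periodic2pi h -> periodic2pi (Derive (Derive h)).
Proof. intros Hs Hp s. apply Derive_periodic; [apply per1; auto| apply hd1, Hs]. Qed.

Lemma ibp_cos h x n : smooth h -> periodic2pi h -> (1 <= n)%nat ->
  RInt (fun t => h (x+t) * cos (INR n * t)) 0 (2*PI) =
  - / (INR n * INR n) * RInt (fun t => Derive (Derive h) (x + t) * cos (INR n * t)) 0 (2*PI).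
Proof.
  intros Hs Hp Hn.
  pose proof (hd0 h Hs) as D0. pose proof (hd1 h Hs) as D1. pose proof (hd2 h Hs) as D2.
  assert (HN : INR n <> 0) by (apply not_0_INR; lia).
  set (F := fun t => h (x+t) * sin (INR n * t) / INR n + Derive h (x+t) * cos (INR n * t) / (INR n * INR n)).
  assert (HI : RInt (fun t => h (x+t) * cos (INR n * t) + / (INR n * INR n) * (Derive (Derive h) (x+t) * cos (INR n * t))) 0 (2*PI)
     = F (2*PI) - F 0).
  { apply RInt_derive'.
    - intros t _. unfold F. auto_derive; [exd| ]. etaD. field; exact HN.
    - intros t _. revert t. conti. }
  rewrite RInt_plus', RInt_scal' in HI; try (apply ex_RInt_cont; conti).
  unfold F in HI. rewrite Hp, (per1 h Hs Hp), sin_2nPI, cos_2nPI, !Rmult_0_r, ?sin_0, ?cos_0, !Rplus_0_r in HI.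
  replace (h x * 0 / INR n + Derive h x * 1 / (INR n * INR n) - (h x * 0 / INR n + Derive h x * 1 / (INR n * INR n))) with 0 in HI by ring.
  lra.
Qed.

Lemma PI_neq0' : PI <> 0.
Proof. apply PI_neq0. Qed.

Lemma fourier_term_int h x n : smooth h -> periodic2pi h -> (1 <= n)%nat ->
  fourier_a h n * cos (INR n * x) + fourier_b h n * sin (INR n * x) =
  / (2*PI) * RInt (fun t => Derive (Derive h) (x+t) * (-2 * cos (INR n * t) / (INR n * INR n))) 0 (2*PI).
Proof.
  intros Hs Hp Hn.
  pose proof (hd0 h Hs) as D0. pose proof (hd1 h Hs) as D1. pose proof (hd2 h Hs) as D2.
  assert (HN : INR n <> 0) by (apply not_0_INR; lia).
  unfold fourier_a, fourier_b.
  transitivity (/PI * RInt (fun y => h y * cos (INR n * (y - x))) 0 (2*PI)).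
  { replace (RInt (fun y => h y * cos (INR n * (y - x))) 0 (2*PI)) with
      (RInt (fun y => cos (INR n * x) * (h y * cos (INR n * y)) + sin (INR n * x) * (h y * sin (INR n * y))) 0 (2*PI)).
    2:{ apply RInt_ext'. intros y _. replace (INR n * (y - x)) with (INR n * y - INR n * x) by ring.
        rewrite cos_minus. ring. }
    rewrite RInt_plus', !RInt_scal'; try (apply ex_RInt_cont; conti). ring. }
  rewrite <- (RInt_periodic_shift (fun y => h y * cos (INR n * (y - x))) x).
  2:{ conti. }
  2:{ intros y. simpl. rewrite (Hp y). f_equal.
      replace (INR n * (y + 2 * PI - x)) with (INR n * (y - x) + 2 * INR n * PI) by ring.
      apply cos_period. }
  replace (RInt (fun t => h (x + t) * cos (INR n * (x + t - x))) 0 (2*PI)) with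
    (RInt (fun t => h (x + t) * cos (INR n * t)) 0 (2*PI)).
  2:{ apply RInt_ext'. intros t _. do 3 f_equal. ring. }
  rewrite ibp_cos by assumption.
  replace (RInt (fun t => Derive (Derive h) (x + t) * (-2 * cos (INR n * t) / (INR n * INR n))) 0 (2*PI)) with
    (RInt (fun t => (-2 / (INR n * INR n)) * (Derive (Derive h) (x + t) * cos (INR n * t))) 0 (2*PI)).
  2:{ apply RInt_ext'. intros t _. field. exact HN. }
  rewrite RInt_scal' by (apply ex_RInt_cont; conti).
  field. split; [exact HN| apply PI_neq0'].
Qed.

Definition Pp (t : R) := - t * t / 2 + PI * t.
Definition Gs (N : nat) (t : R) := fsum (fun n => -2 * cos (INR n * t) / (INR n * INR n)) N.
Definition Qs (N : nat) (t : R) := Pp t - Gs N t.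

Lemma Gs_ex_derive N t : ex_derive (Gs N) t.
Proof.
  unfold Gs. apply (ex_derive_fsum (fun n t => -2 * cos (INR n * t) / (INR n * INR n))).
  intros n _. auto_derive. exact I.
Qed.

Lemma a0_shift h x : smooth h -> periodic2pi h ->
  fourier_a0 h = / (2 * PI) * RInt (fun t => h (x + t)) 0 (2 * PI).
Proof.
  intros Hs Hp. pose proof (hd0 h Hs) as D0. unfold fourier_a0.
  rewrite (RInt_periodic_shift h x); [reflexivity| apply cont_of_derive, D0| exact Hp].
Qed.

Lemma green h x : smooth h -> periodic2pi h ->
  RInt (fun t => h (x + t) + Derive (Derive h) (x + t) * Pp t) 0 (2 * PI) = 2 * PI * h x :> R.
Proof.
  intros Hs Hp.
  pose proof (hd0 h Hs) as D0. pose proof (hd1 h Hs) as D1. pose proof (hd2 h Hs) as D2.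
  rewrite (RInt_derive' (fun t => Derive h (x + t) * Pp t - h (x + t) * (PI - t))).
  - rewrite Rplus_0_r, (Hp x), (per1 h Hs Hp x). unfold Pp. field.
  - intros t _. unfold Pp. auto_derive; [exd| ]. etaD. field.
  - intros t _. revert t. unfold Pp. conti.
Qed.

Lemma int_h2 h x : smooth h -> periodic2pi h ->
  RInt (fun t => Derive (Derive h) (x + t)) 0 (2 * PI) = 0 :> R.
Proof.
  intros Hs Hp.
  pose proof (hd0 h Hs) as D0. pose proof (hd1 h Hs) as D1. pose proof (hd2 h Hs) as D2.
  rewrite (RInt_derive' (fun t => Derive h (x + t))).
  - rewrite Rplus_0_r, (per1 h Hs Hp x). ring.
  - intros t _. auto_derive; [exd| ]. etaD. ring.
  - intros t _. revert t. conti.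
Qed.

Lemma partial_sum_int h x N : smooth h -> periodic2pi h ->
  fsum (fun n => fourier_a h n * cos (INR n * x) + fourier_b h n * sin (INR n * x)) N =
  / (2 * PI) * RInt (fun t => Derive (Derive h) (x + t) * Gs N t) 0 (2 * PI).
Proof.
  intros Hs Hp.
  pose proof (hd0 h Hs) as D0. pose proof (hd1 h Hs) as D1. pose proof (hd2 h Hs) as D2.
  induction N.
  - simpl. unfold Gs; simpl.
    replace (RInt (fun t => Derive (Derive h) (x + t) * 0) 0 (2 * PI)) with
      (RInt (fun t => 0 * Derive (Derive h) (x + t)) 0 (2 * PI)) by (apply RInt_ext'; intros; ring).
    rewrite RInt_scal' by (apply ex_RInt_cont; conti). ring.
  - simpl. rewrite IHN, fourier_term_int by (auto; lia).
    pose proof (Gs_ex_derive N) as DG.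
    replace (RInt (fun t => Derive (Derive h) (x + t) * Gs (S N) t) 0 (2 * PI)) with
      (RInt (fun t => Derive (Derive h) (x + t) * Gs N t + Derive (Derive h) (x + t) * (-2 * cos (INR (S N) * t) / (INR (S N) * INR (S N)))) 0 (2 * PI)).
    2:{ apply RInt_ext'. intros t _. unfold Gs; simpl. ring. }
    rewrite RInt_plus' by (apply ex_RInt_cont; conti). ring.
Qed.

Lemma err_int h x N : smooth h -> periodic2pi h ->
  h x - (fourier_a0 h + fsum (fun n => fourier_a h n * cos (INR n * x) + fourier_b h n * sin (INR n * x)) N) =
  / (2 * PI) * RInt (fun t => Derive (Derive h) (x + t) * (Qs N t - Qs N PI)) 0 (2 * PI).
Proof.
  intros Hs Hp.
  pose proof (hd0 h Hs) as D0. pose proof (hd1 h Hs) as D1. pose proof (hd2 h Hs) as D2.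
  pose proof (Gs_ex_derive N) as DG.
  rewrite partial_sum_int, (a0_shift h x) by assumption.
  pose proof (green h x Hs Hp) as HG.
  rewrite RInt_plus' in HG by (apply ex_RInt_cont; unfold Pp; conti).
  replace (RInt (fun t => Derive (Derive h) (x + t) * (Qs N t - Qs N PI)) 0 (2 * PI)) with
    (RInt (fun t => (Derive (Derive h) (x + t) * Pp t - Derive (Derive h) (x + t) * Gs N t) - Qs N PI * Derive (Derive h) (x + t)) 0 (2 * PI)).
  2:{ apply RInt_ext'. intros t _. unfold Qs. ring. }
  rewrite RInt_minus', RInt_minus', RInt_scal', int_h2 by (try assumption; apply ex_RInt_cont; unfold Pp; conti).
  assert (PI <> 0) by apply PI_neq0'.
  assert (Hx : h x = / (2 * PI) * (2 * PI * h x)) by (field; assumption).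
  rewrite Hx, <- HG. field. assumption.
Qed.

Definition Dk (N : nat) (s : R) := 1 + fsum (fun n => 2 * cos (INR n * s)) N.
Definition om (N : nat) := INR N + / 2.

Lemma om_pos N : 0 < om N.
Proof. unfold om. pose proof (pos_INR N). lra. Qed.

Lemma fsum_S f N : fsum f (S N) = fsum f N + f (S N).
Proof. reflexivity. Qed.

Lemma Dk_closed N s : Dk N s * sin (s / 2) = sin (om N * s).
Proof.
  induction N.
  - unfold Dk, om; simpl. rewrite Rplus_0_r, Rmult_1_l. f_equal. field.
  - unfold Dk in *. rewrite fsum_S.
    assert (E : 2 * cos (INR (S N) * s) * sin (s / 2) = sin (INR (S N) * s + s / 2) - sin (INR (S N) * s - s / 2))
      by (rewrite sin_plus, sin_minus; ring).
    replace ((1 + (fsum (fun n => 2 * cos (INR n * s)) N + 2 * cos (INR (S N) * s))) * sin (s / 2))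
      with ((1 + fsum (fun n => 2 * cos (INR n * s)) N) * sin (s / 2) + 2 * cos (INR (S N) * s) * sin (s / 2)) by ring.
    rewrite IHN, E. unfold om. rewrite S_INR.
    replace ((INR N + 1) * s - s / 2) with ((INR N + / 2) * s) by field.
    replace ((INR N + 1) * s + s / 2) with ((INR N + 1 + / 2) * s) by field. ring.
Qed.

Lemma cos_om_PI N : cos (om N * PI) = 0.
Proof.
  unfold om. replace ((INR N + / 2) * PI) with (INR N * PI + PI / 2) by field.
  rewrite cos_plus, cos_PI2, sin_PI2, sin_nPI. ring.
Qed.

Lemma sin_ge_xcos y : 0 <= y <= PI / 2 -> y * cos y <= sin y.
Proof.
  intros Hy.
  assert (E : RInt (fun z => z * sin z) 0 y = sin y - y * cos y - (sin 0 - 0 * cos 0)).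
  { apply (RInt_derive' (fun z => sin z - z * cos z)).
    - intros z _. auto_derive; [exact I| ring].
    - intros z _. revert z. apply cont_of_derive. intros; auto_derive; exact I. }
  rewrite sin_0 in E.
  assert (0 <= RInt (fun z => z * sin z) 0 y).
  { apply RInt_ge_0; [lra| apply ex_RInt_cont; apply cont_of_derive; intros; auto_derive; exact I|].
    intros z Hz. apply Rmult_le_pos; [lra| apply sin_ge_0; pose proof PI_RGT_0; lra]. }
  lra.
Qed.

Lemma Dk_ex_derive N s : ex_derive (Dk N) s.
Proof.
  unfold Dk. apply (@ex_derive_plus R_AbsRing R_NormedModule (fun _ => 1) (fun s => fsum (fun n => 2 * cos (INR n * s)) N)).
  - apply (@ex_derive_const R_AbsRing R_NormedModule).
  - apply (ex_derive_fsum (fun n s => 2 * cos (INR n * s))). intros; auto_derive; exact I.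
Qed.

Lemma is_derive_val (f : R -> R) x l l' : is_derive f x l -> l = l' -> is_derive f x l'.
Proof. intros H ->. exact H. Qed.

Lemma fsum_scal c f N : fsum (fun n => c * f n) N = c * fsum f N.
Proof. induction N; simpl; [ring| rewrite IHN; ring]. Qed.

Definition Cs (N : nat) (t : R) := fsum (fun n => 2 * cos (INR n * t) / (INR n * INR n)) N.

Lemma Gs_Cs N t : Gs N t = - Cs N t.
Proof.
  unfold Gs, Cs. induction N; simpl; [ring| rewrite IHN; unfold Rdiv; ring].
Qed.

Lemma K1 N t : Qs N t - Qs N PI = - RInt (fun s => (s - t) * Dk N s) t PI.
Proof.
  set (FF := fun s => fsum (fun n => 2 * ((s - t) * sin (INR n * s) / INR n + cos (INR n * s) / (INR n * INR n))) N).
  assert (HF : forall s, is_derive FF s (fsum (fun n => (s - t) * (2 * cos (INR n * s))) N)).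
  { intros s. unfold FF.
    apply (is_derive_fsum (fun n s => 2 * ((s - t) * sin (INR n * s) / INR n + cos (INR n * s) / (INR n * INR n)))).
    intros n Hn. assert (INR n <> 0) by (apply not_0_INR; lia).
    auto_derive; [exact I| field; assumption]. }
  rewrite (RInt_derive' (fun s => (s - t) * (s - t) / 2 + FF s)).
  - unfold FF. rewrite (fsum_ext1 _ (fun n => 2 * cos (INR n * PI) / (INR n * INR n))).
    2:{ intros n Hn. rewrite sin_nPI. field. apply not_0_INR; lia. }
    rewrite (fsum_ext1 (fun n => 2 * ((t - t) * sin (INR n * t) / INR n + cos (INR n * t) / (INR n * INR n))) (fun n => 2 * cos (INR n * t) / (INR n * INR n))).
    2:{ intros n Hn. cbv beta. replace (t - t) with 0 by ring. field. apply not_0_INR; lia. }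
    fold (Cs N PI). fold (Cs N t). unfold Qs, Pp. rewrite !Gs_Cs. field.
  - intros s _.
    assert (H1 : is_derive (fun s => (s - t) * (s - t) / 2) s (s - t)) by (auto_derive; try exact I; field).
    eapply is_derive_val.
    + apply (@is_derive_plus R_AbsRing R_NormedModule (fun s => (s - t) * (s - t) / 2) FF).
      * exact H1.
      * apply HF.
    + unfold Dk. rewrite fsum_scal. unfold plus; simpl. field.
  - intros s _. revert s. pose proof (Dk_ex_derive N) as DD. conti.
Qed.

Definition gp (t s : R) := (sin (s / 2) - (s - t) * cos (s / 2) / 2) / (sin (s / 2) * sin (s / 2)).

Lemma ex_RInt_cont' (f : R -> R) a b :
  (forall z, Rmin a b <= z <= Rmax a b -> continuous f z) -> ex_RInt f a b.
Proof. intros H. apply (@ex_RInt_continuous R_CompleteNormedModule). exact H. Qed.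

Lemma sin_half_pos s : 0 < s <= PI -> 0 < sin (s / 2).
Proof. intros Hs. pose proof PI_RGT_0. apply sin_gt_0; lra. Qed.

Lemma K2 N t : 0 < t <= PI ->
  RInt (fun s => (s - t) * Dk N s) t PI = / om N * RInt (fun s => cos (om N * s) * gp t s) t PI.
Proof.
  intros Ht. pose proof (om_pos N) as Hom. pose proof PI_RGT_0.
  pose proof (Dk_ex_derive N) as DD.
  assert (Hint : forall z, Rmin t PI <= z <= Rmax t PI -> 0 < sin (z / 2)).
  { intros z Hz. rewrite Rmin_left, Rmax_right in Hz by lra. apply sin_half_pos; lra. }
  assert (C2 : forall z, Rmin t PI <= z <= Rmax t PI -> continuous (fun s => cos (om N * s) * gp t s) z).
  { intros z Hz. specialize (Hint z Hz).
    apply (@ex_derive_continuous R_AbsRing R_NormedModule). unfold gp.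
    auto_derive. unfold Rdiv in *. nra. }
  set (B := fun s => - (s - t) * cos (om N * s) / (om N * sin (s / 2))).
  assert (E : RInt (fun s => (s - t) * Dk N s - / om N * (cos (om N * s) * gp t s)) t PI
     = B PI - B t).
  { apply RInt_derive'.
    - intros z Hz. specialize (Hint z Hz).
      assert (HD : Dk N z = sin (om N * z) / sin (z / 2)).
      { rewrite <- Dk_closed. field. lra. }
      unfold B. auto_derive.
      + unfold Rdiv in *. repeat split; nra.
      + rewrite HD. unfold gp. change (z * / 2) with (z / 2). field. lra.
    - intros z Hz. specialize (Hint z Hz).
      apply (@ex_derive_continuous R_AbsRing R_NormedModule). unfold gp.
      auto_derive. unfold Rdiv in *. repeat split; try apply DD; nra. }
  unfold B in E. rewrite cos_om_PI in E. replace (t - t) with 0 in E by ring.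
  rewrite RInt_minus', RInt_scal' in E.
  - replace (- (PI - t) * 0 / (om N * sin (PI / 2)) - - 0 * cos (om N * t) / (om N * sin (t / 2))) with 0 in E by (unfold Rdiv; ring).
    lra.
  - apply ex_RInt_cont'. exact C2.
  - apply ex_RInt_cont. conti.
  - apply (@ex_RInt_scal R_NormedModule). apply ex_RInt_cont'. exact C2.
Qed.

Lemma gp_nonneg t s : 0 < t -> t <= s <= PI -> 0 <= gp t s.
Proof.
  intros Ht Hs. pose proof PI_RGT_0.
  assert (Hsin : 0 < sin (s / 2)) by (apply sin_half_pos; lra).
  assert (Hcos : 0 <= cos (s / 2)) by (apply cos_ge_0; lra).
  assert (Hx : (s / 2) * cos (s / 2) <= sin (s / 2)) by (apply sin_ge_xcos; lra).
  unfold gp. unfold Rdiv. apply Rmult_le_pos.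
  - assert ((s - t) * cos (s / 2) * / 2 <= (s / 2) * cos (s / 2)).
    { replace ((s - t) * cos (s / 2) * / 2) with (((s - t) / 2) * cos (s / 2)) by (unfold Rdiv; ring).
      apply Rmult_le_compat_r; lra. }
    lra.
  - left. apply Rinv_0_lt_compat. nra.
Qed.

Lemma K3 N t : 0 < t <= PI ->
  Rabs (RInt (fun s => cos (om N * s) * gp t s) t PI) <= PI.
Proof.
  intros Ht. pose proof PI_RGT_0.
  assert (Hint : forall z, Rmin t PI <= z <= Rmax t PI -> 0 < sin (z / 2)).
  { intros z Hz. rewrite Rmin_left, Rmax_right in Hz by lra. apply sin_half_pos; lra. }
  assert (C2 : forall z, Rmin t PI <= z <= Rmax t PI -> continuous (fun s => cos (om N * s) * gp t s) z).
  { intros z Hz. specialize (Hint z Hz).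
    apply (@ex_derive_continuous R_AbsRing R_NormedModule). unfold gp.
    auto_derive. unfold Rdiv in *. nra. }
  assert (C3 : forall z, Rmin t PI <= z <= Rmax t PI -> continuous (gp t) z).
  { intros z Hz. specialize (Hint z Hz).
    apply (@ex_derive_continuous R_AbsRing R_NormedModule). unfold gp.
    auto_derive. unfold Rdiv in *. nra. }
  eapply Rle_trans; [apply abs_RInt_le; [lra| apply ex_RInt_cont'; exact C2]|].
  eapply Rle_trans; [apply (RInt_le _ (gp t)); [lra| | apply ex_RInt_cont'; exact C3| ]|].
  - apply ex_RInt_cont'. intros z Hz. apply continuous_Rabs_comp, C2, Hz.
  - intros z Hz. rewrite Rabs_mult.
    pose proof (gp_nonneg t z ltac:(lra) ltac:(lra)).
    rewrite (Rabs_right (gp t z)) by lra.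
    pose proof (COS_bound (om N * z)) as Hc.
    assert (Rabs (cos (om N * z)) <= 1) by (apply Rabs_le; lra).
    nra.
  - rewrite (RInt_derive' (fun s => (s - t) / sin (s / 2))).
    + rewrite sin_PI2. replace (t - t) with 0 by ring. unfold Rdiv. rewrite Rmult_0_l. lra.
    + intros z Hz. specialize (Hint z Hz). auto_derive.
      * unfold Rdiv in *. nra.
      * unfold gp. change (z * / 2) with (z / 2). field. lra.
    + exact C3.
Qed.

Lemma K4 N t : 0 < t <= PI -> Rabs (Qs N t - Qs N PI) <= PI / om N.
Proof.
  intros Ht. pose proof (om_pos N).
  rewrite K1, K2 by exact Ht. rewrite Rabs_Ropp, Rabs_mult, Rabs_right.
  - pose proof (K3 N t Ht). unfold Rdiv. rewrite Rmult_comm.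
    apply Rmult_le_compat_r; [left; apply Rinv_0_lt_compat; lra| exact H0].
  - left. apply Rinv_0_lt_compat; lra.
Qed.

Lemma Qs_sym N t : Qs N (2 * PI - t) = Qs N t.
Proof.
  unfold Qs, Pp, Gs. f_equal.
  - field.
  - apply fsum_ext. intros n. f_equal. f_equal.
    replace (INR n * (2 * PI - t)) with (- (INR n * t) + 2 * INR n * PI) by ring.
    rewrite cos_period, cos_neg. reflexivity.
Qed.

Lemma K5 N t : 0 < t < 2 * PI -> Rabs (Qs N t - Qs N PI) <= PI / om N.
Proof.
  intros Ht. destruct (Rle_dec t PI).
  - apply K4; lra.
  - rewrite <- Qs_sym. apply K4; lra.
Qed.

Lemma series_of_lim (a : nat -> R) (l : R) : is_lim_seq (sum_n a) l -> is_series a l.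
Proof. intros H. exact H. Qed.

Lemma om_lim : is_lim_seq (fun N => / om N) 0.
Proof.
  assert (H : is_lim_seq om p_infty).
  { unfold om. apply (is_lim_seq_plus INR (fun _ => / 2) p_infty (/ 2) p_infty).
    - apply is_lim_seq_INR.
    - apply is_lim_seq_const.
    - reflexivity. }
  apply (is_lim_seq_inv _ _ H). discriminate.
Qed.

Definition fterm (h : R -> R) (x : R) (n : nat) : R :=
  if Nat.eqb n 0 then fourier_a0 h else fourier_a h n * cos (INR n * x) + fourier_b h n * sin (INR n * x).

Lemma err_bound h x N : smooth h -> periodic2pi h ->
  Rabs (h x - sum_n (fterm h x) N) <=
  / (2 * PI) * (RInt (fun t => Rabs (Derive (Derive h) (x + t))) 0 (2 * PI) * (PI / om N)).
Proof.
  intros Hs Hp.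
  pose proof (hd0 h Hs) as D0. pose proof (hd1 h Hs) as D1. pose proof (hd2 h Hs) as D2.
  pose proof (Gs_ex_derive N) as DG. pose proof PI_RGT_0. pose proof (om_pos N).
  rewrite sum_n_fsum.
  replace (fterm h x 0) with (fourier_a0 h) by reflexivity.
  rewrite (fsum_ext1 _ (fun n => fourier_a h n * cos (INR n * x) + fourier_b h n * sin (INR n * x))).
  2:{ intros n Hn. unfold fterm. destruct n; [lia| reflexivity]. }
  rewrite err_int by assumption.
  rewrite Rabs_mult, Rabs_right by (left; apply Rinv_0_lt_compat; lra).
  apply Rmult_le_compat_l; [left; apply Rinv_0_lt_compat; lra|].
  assert (CQ : forall t, continuous (fun t => Derive (Derive h) (x + t) * (Qs N t - Qs N PI)) t).
  { unfold Qs, Pp. conti. }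
  assert (CA : forall t, continuous (fun t => Rabs (Derive (Derive h) (x + t))) t).
  { intros t. apply continuous_Rabs_comp. revert t. conti. }
  eapply Rle_trans; [apply abs_RInt_le; [lra| apply ex_RInt_cont, CQ]|].
  rewrite (Rmult_comm (RInt (fun t => Rabs (Derive (Derive h) (x + t))) 0 (2 * PI))), <- RInt_scal' by (apply ex_RInt_cont, CA).
  apply RInt_le; [lra| | |].
  - apply ex_RInt_cont. intros t. apply continuous_Rabs_comp, CQ.
  - apply ex_RInt_cont. intros t. apply (continuous_mult (fun _ => PI / om N) (fun t => Rabs (Derive (Derive h) (x + t)))).
    + apply continuous_const.
    + apply CA.
  - intros t Ht. rewrite Rabs_mult, Rmult_comm.
    apply Rmult_le_compat_r; [apply Rabs_pos| apply K5, Ht].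
Qed.

Lemma fourier_conv h x : smooth h -> periodic2pi h -> is_series (fterm h x) (h x).
Proof.
  intros Hs Hp. apply series_of_lim.
  set (C := RInt (fun t => Rabs (Derive (Derive h) (x + t))) 0 (2 * PI)).
  set (e := fun N => / (2 * PI) * (C * (PI / om N))).
  assert (He : is_lim_seq e 0).
  { unfold e. replace 0 with (/ (2 * PI) * (C * PI) * 0) by ring.
    apply (is_lim_seq_ext (fun N => / (2 * PI) * (C * PI) * / om N)).
    - intros N. unfold Rdiv. ring.
    - apply (is_lim_seq_scal_l _ _ 0), om_lim. }
  apply (is_lim_seq_le_le (fun N => h x - e N) _ (fun N => h x + e N)).
  - intros N. pose proof (err_bound h x N Hs Hp) as B. fold C in B. fold (e N) in B.
    apply Rabs_le_between' in B. lra.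
  - assert (Hn : is_lim_seq (fun N => - e N) (- 0)) by exact (proj1 (is_lim_seq_opp e 0) He).
    pose proof (is_lim_seq_plus' _ _ (h x) (- 0) (is_lim_seq_const (h x)) Hn) as H.
    replace (h x + - 0) with (h x) in H by ring. exact H.
  - pose proof (is_lim_seq_plus' _ _ (h x) 0 (is_lim_seq_const (h x)) He) as H.
    replace (h x + 0) with (h x) in H by ring. exact H.
Qed.

Lemma sum_n_m_lin (a b : R) (f g : nat -> R) m :
  sum_n_m (fun j => a * f j + b * g j) 0 m = a * sum_n_m f 0 m + b * sum_n_m g 0 m :> R.
Proof.
  induction m.
  - rewrite !sum_n_n. reflexivity.
  - rewrite !sum_n_m_S0, IHm. ring.
Qed.

Lemma cos_sum_tele th al m :
  2 * sin (al / 2) * sum_n_m (fun j => cos (th + INR j * al)) 0 m =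
  sin (th + (INR m + / 2) * al) - sin (th - al / 2).
Proof.
  induction m.
  - rewrite sum_n_n. simpl.
    replace (th + 0 * al) with th by ring.
    replace (th + (0 + / 2) * al) with (th + al / 2) by field.
    rewrite sin_plus, sin_minus. ring.
  - rewrite sum_n_m_S0, Rmult_plus_distr_l, IHm.
    set (a := th + INR (S m) * al).
    replace (th + (INR m + / 2) * al) with (a - al / 2) by (unfold a; rewrite S_INR; field).
    replace (th + (INR (S m) + / 2) * al) with (a + al / 2) by (unfold a; field).
    rewrite sin_plus, sin_minus. ring.
Qed.

Lemma sin_sum_tele th al m :
  2 * sin (al / 2) * sum_n_m (fun j => sin (th + INR j * al)) 0 m =
  cos (th - al / 2) - cos (th + (INR m + / 2) * al).
Proof.
  induction m.
  - rewrite sum_n_n. simpl.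
    replace (th + 0 * al) with th by ring.
    replace (th + (0 + / 2) * al) with (th + al / 2) by field.
    rewrite cos_plus, cos_minus. ring.
  - rewrite sum_n_m_S0, Rmult_plus_distr_l, IHm.
    set (a := th + INR (S m) * al).
    replace (th + (INR m + / 2) * al) with (a - al / 2) by (unfold a; rewrite S_INR; field).
    replace (th + (INR (S m) + / 2) * al) with (a + al / 2) by (unfold a; field).
    rewrite (cos_plus a), (cos_minus a). ring.
Qed.

Lemma sin_ndiv_neq0 n k : (0 < k)%nat -> (n mod k <> 0)%nat -> sin (PI * INR n / INR k) <> 0.
Proof.
  intros Hk Hmod Hs. apply sin_eq_0_0 in Hs. destruct Hs as [z Hz].
  assert (HkR : INR k <> 0) by (apply not_0_INR; lia).
  assert (E : INR n = IZR z * INR k).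
  { apply (Rmult_eq_reg_l PI); [| apply PI_neq0].
    apply (Rmult_eq_reg_r (/ INR k)); [| apply Rinv_neq_0_compat; exact HkR].
    replace (PI * INR n * / INR k) with (PI * INR n / INR k) by (unfold Rdiv; ring).
    rewrite Hz. field. exact HkR. }
  rewrite !INR_IZR_INZ, <- mult_IZR in E. apply eq_IZR in E.
  apply Hmod. apply Nat.Div0.mod_divides. 
  assert (0 <= z)%Z by nia.
  exists (Z.to_nat z). lia.
Qed.

Lemma avg_ndiv a b s n m : (n mod S m <> 0)%nat ->
  sum_n_m (fun j => a * cos (INR n * (s + 2 * PI * INR j / INR (S m))) + b * sin (INR n * (s + 2 * PI * INR j / INR (S m)))) 0 m = 0 :> R.
Proof.
  intros Hmod. rewrite sum_n_m_lin.
  assert (Hk : INR (S m) <> 0) by (apply not_0_INR; lia).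
  set (al := 2 * PI * INR n / INR (S m)).
  assert (Ea : forall j, INR n * (s + 2 * PI * INR j / INR (S m)) = INR n * s + INR j * al)
    by (intros j; unfold al; field; exact Hk).
  rewrite (sum_n_m_ext _ (fun j => cos (INR n * s + INR j * al))) by (intros j; rewrite Ea; reflexivity).
  rewrite (sum_n_m_ext (fun j => sin _) (fun j => sin (INR n * s + INR j * al))) by (intros j; rewrite Ea; reflexivity).
  assert (Hsin : sin (al / 2) <> 0).
  { replace (al / 2) with (PI * INR n / INR (S m)) by (unfold al; field; exact Hk).
    apply sin_ndiv_neq0; [lia| exact Hmod]. }
  assert (Eb : INR n * s + (INR m + / 2) * al = (INR n * s - al / 2) + 2 * INR n * PI).
  { unfold al. rewrite S_INR in *. field. exact Hk. }
  pose proof (cos_sum_tele (INR n * s) al m) as C1.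
  pose proof (sin_sum_tele (INR n * s) al m) as S1.
  rewrite Eb, sin_period, Rminus_diag in C1.
  rewrite Eb, cos_period, Rminus_diag in S1.
  apply Rmult_integral in C1. apply Rmult_integral in S1.
  destruct C1 as [C1|C1]; [exfalso; apply Hsin; lra|].
  destruct S1 as [S1|S1]; [exfalso; apply Hsin; lra|].
  rewrite C1, S1. ring.
Qed.

Lemma avg_div a b s n m : (n mod S m = 0)%nat ->
  sum_n_m (fun j => a * cos (INR n * (s + 2 * PI * INR j / INR (S m))) + b * sin (INR n * (s + 2 * PI * INR j / INR (S m)))) 0 m
  = INR (S m) * (a * cos (INR n * s) + b * sin (INR n * s)) :> R.
Proof.
  intros Hmod. apply Nat.Div0.mod_divides in Hmod. destruct Hmod as [c Hc].
  assert (Hk : INR (S m) <> 0) by (apply not_0_INR; lia).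
  assert (Ea : forall j, INR n * (s + 2 * PI * INR j / INR (S m)) = INR n * s + 2 * INR (j * c) * PI).
  { intros j. rewrite Hc, !mult_INR. field. exact Hk. }
  rewrite (sum_n_m_ext _ (fun _ => a * cos (INR n * s) + b * sin (INR n * s))).
  2:{ intros j. rewrite Ea, cos_period, sin_period. reflexivity. }
  rewrite sum_n_m_const. rewrite Nat.sub_0_r. reflexivity.
Qed.

Lemma is_series_sum_n_m (a : nat -> nat -> R) (l : nat -> R) m :
  (forall j, is_series (a j) (l j)) ->
  is_series (fun n => sum_n_m (fun j => a j n) 0 m) (sum_n_m l 0 m).
Proof.
  intros H. induction m.
  - rewrite sum_n_n. apply (is_series_ext (a 0%nat)); [intros n; rewrite sum_n_n; reflexivity| apply H].
  - rewrite sum_n_m_S0.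
    apply (is_series_ext (fun n => plus (sum_n_m (fun j => a j n) 0 m) (a (S m) n))).
    + intros n. rewrite sum_n_m_S0. reflexivity.
    + apply (@is_series_plus R_AbsRing R_NormedModule); [exact IHm| apply H].
Qed.

Lemma is_series_ind (c : R) : is_series (fun n => if Nat.eqb n 0 then c else 0) c.
Proof.
  apply series_of_lim. apply (is_lim_seq_ext (fun _ => c)); [| apply is_lim_seq_const].
  intros N. rewrite sum_n_fsum. simpl. rewrite (fsum_ext1 _ (fun _ => 0)).
  - assert (Z : fsum (fun _ => 0) N = 0) by (induction N; simpl; [reflexivity| rewrite IHN; ring]).
    rewrite Z. ring.
  - intros n Hn. destruct n; [lia| reflexivity].
Qed.

Theorem proposition3p7 (h : R -> R) (k : nat) :
  smooth h -> periodic2pi h -> (2 < k)%nat ->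
  smooth (hk h k) /\ periodic2pi (hk h k) /\
  (forall s : R, OPS h k s = hedgehog (hk h k) s) /\
  (forall s : R, is_series (fourier_term_div h k s) (hk h k s)).
Proof.
  intros Hs Hp Hk. destruct k as [|m]; [lia|].
  split; [apply hk_smooth; exact Hs|].
  split; [apply hk_periodic; exact Hp|].
  split; [intros s; apply OPS_eq; assumption|].
  intros s.
  assert (HkR : INR (S m) <> 0) by (apply not_0_INR; lia).
  set (sj := fun j => s + 2 * PI * INR j / INR (S m)).
  assert (HS : is_series (fun n => sum_n_m (fun j => fterm h (sj j) n) 0 m) (sum_n_m (fun j => h (sj j)) 0 m)).
  { apply (is_series_sum_n_m (fun j n => fterm h (sj j) n) (fun j => h (sj j))).
    intros j. apply fourier_conv; assumption. }
  pose proof (@is_series_scal R_AbsRing R_NormedModule (/ INR (S m)) _ _ HS) as HS2.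
  pose proof (@is_series_minus R_AbsRing R_NormedModule _ _ _ _ HS2 (is_series_ind (fourier_a0 h))) as H3.
  replace (hk h (S m) s) with (plus (scal (/ INR (S m)) (sum_n_m (fun j => h (sj j)) 0 m)) (opp (fourier_a0 h))).
  2:{ unfold hk. replace (S m - 1)%nat with m by lia. unfold plus, opp, scal; cbn -[INR sum_n_m RInt].
      unfold fourier_a0, avg_width. change mult with Rmult. unfold sj.
      assert (PI <> 0) by apply PI_neq0. field. split; assumption. }
  refine (is_series_ext _ _ _ _ H3).
  intros n. unfold plus, opp, scal; cbn -[INR sum_n_m fourier_term_div fterm]. change mult with Rmult.
  destruct n as [|n'].
  - rewrite (sum_n_m_ext _ (fun _ => fourier_a0 h)) by reflexivity.
    rewrite sum_n_m_const, Nat.sub_0_r. unfold fourier_term_div. simpl Nat.ltb. simpl Nat.eqb.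
    replace ((1 <? 0) && (m - m =? 0))%bool with false by reflexivity. cbv iota. field. exact HkR.
  - rewrite (sum_n_m_ext _ (fun j => fourier_a h (S n') * cos (INR (S n') * (s + 2 * PI * INR j / INR (S m)))
        + fourier_b h (S n') * sin (INR (S n') * (s + 2 * PI * INR j / INR (S m))))) by reflexivity.
    simpl Nat.eqb. unfold fourier_term_div.
    destruct (Nat.eqb_spec (S n' mod S m) 0) as [Hm|Hm].
    + rewrite avg_div by exact Hm.
      assert (Hlt : Nat.ltb 1 (S n') = true).
      { apply Nat.ltb_lt. apply Nat.Div0.mod_divides in Hm. destruct Hm as [c Hc].
        destruct c; nia. }
      rewrite Hlt. simpl andb. cbv iota. field. exact HkR.
    + rewrite avg_ndiv by exact Hm. rewrite Bool.andb_false_r. ring.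
Qed.
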